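(* Let $\mathbf X_I=(X_1,\dots,X_d)$ satisfy conditions (i) and (ii) below, and let $I_1,\dots,I_p$ be a partition of $I$. Then for all $(\lambda_1,\dots,\lambda_p)\in(0,\infty)^p$, $$E\Big(\max_{1\le j\le p} M(I_j)^{\lambda_j}\Big)=\frac{L}{1+L},\qquad L=\ell_{\mathbf X_I}\Big(\sigma_1^{\eta}\sum_{j=1}^p\lambda_j^{\eta}\delta_1(I_j),\dots,\sigma_d^{\eta}\sum_{j=1}^p\lambda_j^{\eta}\delta_d(I_j)\Big).$$
   Context: Let $d\ge 1$, $I=\{1,\dots,d\}$, and let $I_1,\dots,I_p$ ($1\le p\le d$) be a partition of $I$ into nonempty blocks of consecutive indices. Let $\mathbf X_I=(X_1,\dots,X_d)$ be a random vector with joint distribution function $F_{\mathbf X_I}$ and univariate marginal distribution functions $F_i$ such that: (i) $F_i(t)=\exp(-\sigma_i t^{-1/\eta})$ for $t>0$, $i=1,\dots,d$, for some constants $\sigma_i>0$ and $\eta\in(0,1]$; (ii) the function $\ell_{\mathbf X_I}(t_1,\dots,t_d)=-\ln F_{\mathbf X_I}(t_1,\dots,t_d)$, $(t_1,\dots,t_d)\in(0,\infty)^d$, is homogeneous of order $-1/\eta$, i.e. $\ell_{\mathbf X_I}(s\mathbf t)=s^{-1/\eta}\ell_{\mathbf X_I}(\mathbf t)$ for all $s>0$. For $i\in I$ and $J\subseteq I$, $\delta_i(J)=1$ if $i\in J$ and $\delta_i(J)=0$ otherwise. For nonempty $J\subseteq I$, $M(J)=\max_{i\in J}F_i(X_i)$.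 *)

(* Defs.v *)
From HB Require Import structures.
From mathcomp Require Import all_boot all_order all_algebra.
From mathcomp Require Import all_classical all_reals all_analysis.
Set Implicit Arguments. Unset Strict Implicit. Unset Printing Implicit Defensive.
Import Order.TTheory GRing.Theory Num.Theory.
Local Open Scope classical_set_scope.
Local Open Scope ring_scope.

Definition joint_cdf {dT} {T : measurableType dT} {R : realType}
  (P : probability T R) (n : nat) (X : 'I_n -> T -> R) (t : 'I_n -> R) : R :=
  fine (P [set w | forall i, X i w <= t i]).

Definition marg_cdf {dT} {T : measurableType dT} {R : realType}
  (P : probability T R) (Y : T -> R) (x : R) : R :=
  fine (P [set w | Y w <= x]).

Definition ell {dT} {T : measurableType dT} {R : realType}
  (P : probability T R) (n : nat) (X : 'I_n -> T -> R) (t : 'I_n -> R) : R :=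
  - ln (joint_cdf P X t).

(* M(J) for the block J = blk^-1(j): max_{i in J} F_i(X_i) (pointwise). *)
Definition Mblock {dT} {T : measurableType dT} {R : realType}
  (P : probability T R) (n p : nat) (X : 'I_n -> T -> R) (blk : 'I_n -> 'I_p)
  (j : 'I_p) (w : T) : R :=
  \big[Num.max/0]_(i < n | blk i == j) marg_cdf P (X i) (X i w).

(* Main.v *)
Require Import Defs.
From HB Require Import structures.
From mathcomp Require Import all_boot all_order all_algebra.
From mathcomp Require Import all_classical all_reals all_analysis.
From mathcomp Require Import ring lra.
From mathcomp Require Import measurable_realfun.
Import Order.TTheory GRing.Theory Num.Theory.
Local Open Scope classical_set_scope.
Import numFieldNormedType.Exports.
Local Open Scope ring_scope.

Lemma measurable_le d (T : measurableType d) (R : realType) (P : probability T R)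
  (f : {RV P >-> R}) (c : R) : measurable [set w | f w <= c].
Proof.
have := measurable_funP f measurableT _ (measurable_itv `]-oo, c]).
rewrite setTI; congr measurable; apply/seteqP; split => w /=; by rewrite in_itv.
Qed.
Arguments measurable_le {d T R P} f c.

Lemma marg_mono d (T : measurableType d) (R : realType) (P : probability T R)
  (f : {RV P >-> R}) x y : x <= y -> marg_cdf P (fun w => f w) x <= marg_cdf P (fun w => f w) y.
Proof.
move=> xy; rewrite /marg_cdf; apply: fine_le; rewrite ?fin_num_measure//.
  exact: measurable_le. exact: measurable_le.
rewrite le_measure// ?inE; first exact: measurable_le.
  exact: measurable_le.
by move=> w /= /le_trans; apply.
Qed.

Lemma marg_ge0 d (T : measurableType d) (R : realType) (P : probability T R)
  (f : T -> R) x : 0 <= marg_cdf P f x.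
Proof. by rewrite /marg_cdf fine_ge0. Qed.

Lemma marg_le1 d (T : measurableType d) (R : realType) (P : probability T R)
  (f : {RV P >-> R}) x : marg_cdf P (fun w => f w) x <= 1.
Proof.
rewrite /marg_cdf; have := @probability_le1 _ _ _ P _ (measurable_le f x).
have := measure_ge0 P [set w | f w <= x].
set m := P _; case: m => //= r r0 /=; by rewrite lee_fin.
Qed.

Lemma Fle_iff (R : realType) (F : R -> R) (s e t x : R) :
  0 < s -> 0 < e -> 0 < t -> {homo F : a b / a <= b} ->
  (forall u, 0 < u -> F u = expR (- (s * u `^ (- e^-1)))) ->
  (F x <= F t) = (x <= t).
Proof.
move=> s0 e0 t0 mono hF.
apply/idP/idP => [|/mono//].
have [x0|x0] := leP x 0; first by move=> _; rewrite (le_trans x0) ?ltW.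
rewrite !hF// ler_expR lerN2 ler_pM2l// !powRN lef_pV2 ?posrE ?powR_gt0//.
move=> h; rewrite leNgt; apply/negP => tx.
have := gt0_ltr_powR (r := e^-1) _ _ _ tx; rewrite invr_gt0 e0 => /(_ isT).
by rewrite !nnegrE !ltW// => /(_ isT isT); rewrite ltNge h.
Qed.

Lemma powR_le_iff (R : realType) (a r l : R) : 0 <= a -> 0 <= r -> 0 < l ->
  (a `^ l <= r) = (a <= r `^ l^-1).
Proof.
move=> a0 r0 l0.
apply/idP/idP => h.
- have := ge0_ler_powR (r:=l^-1) _ _ _ h.
  rewrite -powRrM mulfV ?gt_eqF// powRr1//; apply; rewrite ?invr_ge0 ?ltW// nnegrE ?powR_ge0//.
- have := ge0_ler_powR (r:=l) _ _ _ h.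
  rewrite -powRrM mulVf ?gt_eqF// powRr1//; apply; rewrite ?ltW// nnegrE ?powR_ge0//.
Qed.

Lemma Z_le (R : realType) (d p : nat) (U : 'I_d -> R) (blk : 'I_d -> 'I_p)
  (lam : 'I_p -> R) (r : R) :
  (forall i, 0 <= U i) -> (forall j, 0 < lam j) -> 0 <= r ->
  ((\big[Num.max/0]_(j < p) (\big[Num.max/0]_(i < d | blk i == j) U i) `^ lam j <= r)
   <-> (forall i, U i <= r `^ (lam (blk i))^-1)).
Proof.
move=> U0 l0 r0; split.
- move/bigmax_leP => [_ h] i.
  have := h (blk i) isT; rewrite powR_le_iff//; last first.
    by apply: (big_ind (fun x => 0 <= x)) => // a b a0 _; rewrite le_max a0.
  by move/bigmax_leP => [_]; apply; rewrite eqxx.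
- move=> h; apply/bigmax_leP; split => // j _.
  rewrite powR_le_iff//; last by apply: (big_ind (fun x => 0 <= x)) => // a b a0 _; rewrite le_max a0.
  apply/bigmax_leP; split; first exact: powR_ge0.
  by move=> i /eqP <-; exact: h.
Qed.

Lemma powR_cont (R : realType) (e y : R) : 0 < y -> {for y, continuous (fun z : R => z `^ e)}.
Proof.
move=> hy; apply: differentiable_continuous; apply/derivable1_diffP.
by apply: derivable_powR; rewrite in_itv /= hy.
Qed.

Lemma int01 (R : realType) (L : R) : 0 < L ->
  (\int[lebesgue_measure]_(r in `[0%R, 1%R]) (1 - r `^ L)%:E = (L / (1 + L))%:E)%E.
Proof.
move=> L0.
have L10 : 0 < L + 1 by rewrite addr_gt0.
pose F r := r - r `^ (L + 1) / (L + 1).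
have dF (x : R) : 0 < x -> is_derive x (1:R) F (1 - x `^ L).
  move=> x0; have hp := is_derive1_powR (L + 1) x0.
  have h := is_deriveB (is_derive_id x 1) (is_deriveZ (L + 1)^-1 hp).
  have -> : F = id - (L + 1)^-1 \*: (@powR R ^~ (L + 1)).
    by apply/funext => r; rewrite /F /= mulrC.
  apply: (is_derive_eq h); rewrite addrK; congr (_ - _).
  by rewrite -[_ *: _]/((L + 1)^-1 * ((L + 1) * x `^ L)) mulrA mulVf ?gt_eqF// mul1r.
rewrite (@continuous_FTC2 _ _ F)//=.
- rewrite /F !powR1 powR0 ?gt_eqF// mul0r subr0 oppr0 adde0 mul1r; congr (_%:E).
  by field; rewrite addrC gt_eqF.
- apply/continuous_within_itvP => //; split.
  + move=> x; rewrite in_itv /= => /andP[x0 _].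
    apply: cvgB; first exact: cvg_cst.
    exact: powR_cont.
  + rewrite powR0 ?gt_eqF// subr0; rewrite -[X in _ --> X]subr0.
    apply: cvgB; first exact: cvg_cst.
    exact: powR_cvg0.
  + apply: cvg_at_left_filter; apply: cvgB; first exact: cvg_cst.
    exact: powR_cont.
- split.
  + move=> x; rewrite in_itv /= => /andP[x0 _].
    by have [] := dF x x0.
  + rewrite /F powR0 ?gt_eqF// mul0r subr0; rewrite -[X in _ --> X]subr0.
    apply: cvgB; first by apply: cvg_at_right_filter; exact: cvg_id.
    rewrite -[X in _ --> X](mul0r (L + 1)^-1); apply: cvgM; last exact: cvg_cst.
    exact: powR_cvg0.
  + apply: cvg_at_left_filter; apply: cvgB; first exact: cvg_id.
    apply: cvgM; last exact: cvg_cst.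
    exact: powR_cont.
- move=> x; rewrite in_itv /= => /andP[x0 _].
  by rewrite derive1E; have [_ ->] := dF x x0.
Qed.

Lemma measurable_jB d (T : measurableType d) (R : realType) (P : probability T R)
  (n : nat) (X : 'I_n -> {RV P >-> R}) (t : 'I_n -> R) :
  measurable [set w | forall i, X i w <= t i].
Proof.
rewrite (_ : [set w | _] = \bigcap_(i in [set: 'I_n]) [set w | X i w <= t i]).
  apply: fin_bigcap_measurable => //; 
  by move=> i _; exact: measurable_le.
apply/seteqP; split => w /= h i; [by move=> _; apply: h | by apply: h].
Qed.

Lemma jcdf_le d (T : measurableType d) (R : realType) (P : probability T R)
  (n : nat) (X : 'I_n -> {RV P >-> R}) (t : 'I_n -> R) (i : 'I_n) :
  joint_cdf P (fun i w => X i w) t <= marg_cdf P (fun w => X i w) (t i).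
Proof.
rewrite /joint_cdf /marg_cdf; apply: fine_le; rewrite ?fin_num_measure//.
  exact: measurable_jB. exact: measurable_le.
rewrite le_measure// ?inE; first exact: measurable_jB.
  exact: measurable_le.
by move=> w /= h; apply: h.
Qed.
Arguments jcdf_le {d T R P n} X t i.

Lemma jcdf_ge0 d (T : measurableType d) (R : realType) (P : probability T R)
  (n : nat) (X : 'I_n -> T -> R) (t : 'I_n -> R) :
  0 <= joint_cdf P X t.
Proof. by rewrite /joint_cdf fine_ge0. Qed.
Lemma measurable_gt d (T : measurableType d) (R : realType) (P : probability T R)
  (f : {RV P >-> R}) (c : R) : measurable [set w | c < f w].
Proof.
rewrite (_ : [set w | c < f w] = ~` [set w | f w <= c]); first exact/measurableC/measurable_le.
by apply/seteqP; split => w /=; rewrite ltNge => /negP.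
Qed.
Arguments measurable_gt {d T R P} f c.

Lemma jcdf_lb d (T : measurableType d) (R : realType) (P : probability T R)
  (n : nat) (X : 'I_n -> {RV P >-> R}) (t : 'I_n -> R) :
  1 - \sum_(i < n) (1 - marg_cdf P (fun w => X i w) (t i))
    <= joint_cdf P (fun i w => X i w) t.
Proof.
set B := [set w | forall i, X i w <= t i].
pose G (k : nat) := [set w | exists i : 'I_n, (i : nat) = k /\ t i < X i w].
have GE (k : 'I_n) : G k = [set w | t k < X k w].
  apply/seteqP; split => w /=; last by move=> h; exists k.
  by move=> [i [/val_inj -> h]].
have eqCB : ~` B = \big[setU/set0]_(k < n) G k.
  rewrite -bigcup_mkord; apply/seteqP; split => w /=.
  - move=> /existsNP [i] /negP; rewrite -ltNge => h.
    by exists (nat_of_ord i); [exact: ltn_ord | exists i].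
  - move=> [k _ [i [_ h]]] hB; by have := hB i; rewrite leNgt h.
have mG : forall k, (k < n)%N -> measurable (G k).
  move=> k0 kn; rewrite (GE (Ordinal kn)); exact: measurable_gt.
have mCB : measurable (~` B) by rewrite eqCB; apply: bigsetU_measurable => k _; exact: mG.
have PB : P B = (1 - P (~` B))%E by rewrite -probability_setC // setCK.
have sub : (P (~` B) <= \sum_(k < n) P (G k))%E.
  apply: content_subadditive => //; last by rewrite eqCB.
have PG (k : 'I_n) : P (G k) = (1 - marg_cdf P (fun w => X k w) (t k))%:E.
  rewrite GE (_ : [set w | t k < X k w] = ~` [set w | X k w <= t k]); last first.
    by apply/seteqP; split => w /=; rewrite ltNge => /negP.
  rewrite probability_setC; last exact: measurable_le.
  rewrite /marg_cdf -(fineK (fin_num_measure P _ (measurable_le (X k) (t k)))) /=.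
  by [].
rewrite (eq_bigr _ (fun k _ => PG k)) sumEFin in sub.
rewrite /joint_cdf -/B PB.
have : (P (~` B)) \is a fin_num by rewrite fin_num_measure.
move: sub; case: (P (~` B)) => // a sub _ /=.
by rewrite lerD2l lerN2 -lee_fin.
Qed.
Arguments jcdf_lb {d T R P n} X t.

Lemma jcdf_pos d (T : measurableType d) (R : realType) (P : probability T R)
  (n : nat) (X : 'I_n -> {RV P >-> R}) (sigma : 'I_n -> R) (eta : R) :
  (0 < n)%N -> 0 < eta -> (forall i, 0 < sigma i) ->
  (forall (i : 'I_n) (t : R), 0 < t ->
     marg_cdf P (fun w => X i w) t = expR (- (sigma i * t `^ (- eta^-1)))) ->
  (forall (s : R) (t : 'I_n -> R), 0 < s -> (forall i, 0 < t i) ->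
     ell P (fun i w => X i w) (fun i => s * t i)
       = s `^ (- eta^-1) * ell P (fun i w => X i w) t) ->
  forall t : 'I_n -> R, (forall i, 0 < t i) ->
    0 < joint_cdf P (fun i w => X i w) t < 1.
Proof.
move=> n0 eta0 sig0 hmarg hhom.
have lt1 t : (forall i, 0 < t i) -> joint_cdf P (fun i w => X i w) t < 1.
  move=> t0; pose i0 := Ordinal n0.
  apply: (le_lt_trans (jcdf_le X t i0)); rewrite hmarg // expR_lt1 oppr_lt0.
  by rewrite mulr_gt0 // powR_gt0.
move=> t t0; rewrite lt1 // andbT.
pose c i := sigma i * t i `^ (- eta^-1).
have c0 i : 0 < c i by rewrite mulr_gt0 // powR_gt0.
pose S := \sum_(i < n) c i.
have S0 : 0 <= S by rewrite sumr_ge0 // => i _; exact: ltW.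
pose s0 := (S + 1) `^ eta.
have S10 : 0 < S + 1 by rewrite ltr_wpDl.
have s00 : 0 < s0 by rewrite powR_gt0.
have s0e : s0 `^ (- eta^-1) = (S + 1)^-1.
  by rewrite -powRrM mulrN mulfV ?gt_eqF // powR_inv1 // ltW.
have key : 0 < joint_cdf P (fun i w => X i w) (fun i => s0 * t i).
  apply: (lt_le_trans _ (jcdf_lb X _)).
  have le1 : \sum_(i < n) (1 - marg_cdf P (fun w => X i w) (s0 * t i)) <= S / (S + 1).
    rewrite /S mulr_suml; apply: ler_sum => i _.
    rewrite hmarg; last by rewrite mulr_gt0.
    rewrite powRM; [|exact: ltW|exact: ltW]; rewrite s0e.
    have := expR_ge1Dx (- (sigma i * ((S + 1)^-1 * t i `^ (- eta^-1)))).
    rewrite /c; set a := sigma i * _; set b := _ / _.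
    have -> : b = a by rewrite /a /b mulrCA mulrC.
    lra.
  rewrite subr_gt0 (le_lt_trans le1) // ltr_pdivrMr // mul1r; lra.
have ell_pos : 0 < ell P (fun i w => X i w) (fun i => s0 * t i).
  rewrite /ell oppr_gt0 ln_lt0 // key /= lt1 // => i; exact: mulr_gt0.
rewrite hhom // pmulr_rgt0 ?powR_gt0 // /ell oppr_gt0 in ell_pos.
have [//|h] := ltP 0 (joint_cdf P (fun i w => X i w) t).
by rewrite ln0 // ltxx in ell_pos.
Qed.

Lemma measurable_bigmax d (T : measurableType d) (R : realType) (I : Type)
  (s : seq I) (Pr : pred I) (f : I -> T -> R) :
  (forall i, measurable_fun setT (f i)) ->
  measurable_fun setT (fun w => \big[Num.max/0]_(i <- s | Pr i) f i w).
Proof.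
move=> mf; elim: s => [|a s IH].
  rewrite (_ : (fun w => _) = fun=> 0); first exact: measurable_cst.
  by apply/funext => w; rewrite big_nil.
rewrite (_ : (fun w => _) = fun w => if Pr a then Num.max (f a w)
   (\big[Num.max/0]_(i <- s | Pr i) f i w) else \big[Num.max/0]_(i <- s | Pr i) f i w).
  case: (Pr a) => //; exact: (measurable_maxr (mf a) IH).
by apply/funext => w; rewrite big_cons.
Qed.

Lemma measurable_marg d (T : measurableType d) (R : realType) (P : probability T R)
  (f : {RV P >-> R}) : measurable_fun setT (fun w => marg_cdf P (fun w => f w) (f w)).
Proof.
apply: measurableT_comp; last exact: measurable_funP.
apply: nondecreasing_measurable => // x y; exact: marg_mono.
Qed.

Lemma pw_aux1 (R : realType) (a e : R) : 0 < a -> 0 < e -> (a `^ e) `^ (- e^-1) = a^-1.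
Proof.
move=> a0 e0; rewrite -powRrM mulrN mulfV ?gt_eqF // powR_inv1 //; exact: ltW.
Qed.

Lemma pw_aux2 (R : realType) (a e : R) : 0 < a -> 0 < e -> (a `^ (- e)) `^ (- e^-1) = a.
Proof.
move=> a0 e0; rewrite -powRrM mulrNN mulfV ?gt_eqF // powRr1 //; exact: ltW.
Qed.

Lemma sum_blk (R : realType) (d p : nat) (blk : 'I_d -> 'I_p) (g : 'I_p -> R) (i : 'I_d) :
  \sum_(j < p) g j * (blk i == j)%:R = g (blk i).
Proof.
rewrite (bigD1 (blk i)) //= eqxx mulr1 big1 ?addr0 // => j /negbTE.
by rewrite eq_sym => ->; rewrite mulr0.
Qed.

Theorem lemma2 (dT : measure_display) (T : measurableType dT) (R : realType)
  (P : probability T R) (d p : nat) (X : 'I_d -> {RV P >-> R})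
  (sigma : 'I_d -> R) (eta : R) (blk : 'I_d -> 'I_p) :
  (0 < d)%N ->
  (forall j : 'I_p, exists i : 'I_d, blk i = j) ->
  (forall i k : 'I_d, (i <= k)%N -> (blk i <= blk k)%N) ->
  0 < eta -> eta <= 1 ->
  (forall i, 0 < sigma i) ->
  (forall (i : 'I_d) (t : R), 0 < t ->
     marg_cdf P (fun w => X i w) t = expR (- (sigma i * t `^ (- eta^-1)))) ->
  (forall (s : R) (t : 'I_d -> R), 0 < s -> (forall i, 0 < t i) ->
     ell P (fun i w => X i w) (fun i => s * t i)
       = s `^ (- eta^-1) * ell P (fun i w => X i w) t) ->
  forall lam : 'I_p -> R, (forall j, 0 < lam j) ->
  let L := ell P (fun i w => X i w)
             (fun i => sigma i `^ eta *
                       \sum_(j < p) lam j `^ eta * (blk i == j)%:R) in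
  ('E_P[fun w => (\big[Num.max/0]_(j < p)
                    (Mblock P (fun i w => X i w) blk j w) `^ lam j)%R]
   = (L / (1 + L))%:E)%E.
Proof.
move=> d0 hsurj hmono eta0 eta1 sig0 hmarg hhom lam lam0 L.
pose Zf := fun w => \big[Num.max/0]_(j < p)
                    (Mblock P (fun i w => X i w) blk j w) `^ lam j.
have mZ : measurable_fun setT Zf.
  apply: measurable_bigmax => j; apply: (measurableT_comp (measurable_powR (lam j))).

  rewrite /Mblock; apply: measurable_bigmax => i; exact: measurable_marg.
pose Zr : {RV P >-> R} := HB.pack Zf (isMeasurableFun.Build _ _ _ _ Zf mZ).
change ('E_P[Zr] = (L / (1 + L))%:E)%E.
pose U i w := marg_cdf P (fun w => X i w) (X i w).
have U0 i w : 0 <= U i w by exact: marg_ge0.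
have U1 i w : U i w <= 1 by exact: marg_le1.
have Zle w r : 0 <= r -> (Zf w <= r <-> forall i, U i w <= r `^ (lam (blk i))^-1).
  move=> r0; exact: (@Z_le R d p (fun i => U i w) blk lam r (fun i => U0 i w) lam0 r0).
have Z0 w : 0 <= Zf w.
  rewrite /Zf; apply: (big_ind (fun x => 0 <= x)) => //.
    by move=> a b a0 _; rewrite le_max a0.
  by move=> j _; exact: powR_ge0.
have Z1 w : Zf w <= 1.
  by apply/(Zle w 1 ler01) => i; rewrite powR1.
have sumE i : \sum_(j < p) lam j `^ eta * (blk i == j)%:R = lam (blk i) `^ eta.
  exact: sum_blk.
pose tau i := sigma i `^ eta * \sum_(j < p) lam j `^ eta * (blk i == j)%:R.
have tau0 i : 0 < tau i by rewrite /tau sumE mulr_gt0 ?powR_gt0.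
have hJ := @jcdf_pos dT T R P d X sigma eta d0 eta0 sig0 hmarg hhom.
have LE : L = ell P (fun i w => X i w) tau by [].
have Lpos : 0 < L.
  rewrite LE /ell oppr_gt0 ln_lt0 //; exact: hJ.
have Fmono i : {homo marg_cdf P (fun w => X i w) : a b / a <= b}.
  by move=> a b; exact: marg_mono.
have cdfZ r : 0 < r < 1 -> P [set w | Zf w <= r] = (r `^ L)%:E.
  move=> /andP[r0 r1].
  have lr : 0 < - ln r by rewrite oppr_gt0 ln_lt0 // r0 r1.
  pose s := (- ln r) `^ (- eta).
  have s0 : 0 < s by rewrite powR_gt0.
  pose t i := s * tau i.
  have t0 i : 0 < t i by rewrite mulr_gt0.
  have Ft i : marg_cdf P (fun w => X i w) (t i) = r `^ (lam (blk i))^-1.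
    rewrite hmarg // /t /tau sumE.
    rewrite powRM; [|exact: ltW|by rewrite mulr_ge0 ?powR_ge0].
    rewrite powRM; [|exact: powR_ge0|exact: powR_ge0].
    rewrite pw_aux2 // !pw_aux1 //.
    rewrite /powR (gt_eqF r0); congr expR.
    by field; rewrite !gt_eqF.
  have setE : [set w | Zf w <= r] = [set w | forall i, X i w <= t i].
    apply/seteqP; split => w /=.
    - move/(Zle w r (ltW r0)) => h i.
      rewrite -(@Fle_iff R (marg_cdf P (fun w => X i w)) (sigma i) eta (t i) (X i w)
        (sig0 i) eta0 (t0 i) (Fmono i) (hmarg i)).
      by rewrite Ft; exact: h.
    - move=> h; apply/(Zle w r (ltW r0)) => i; rewrite -Ft.
      rewrite (@Fle_iff R (marg_cdf P (fun w => X i w)) (sigma i) eta (t i) (X i w)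
        (sig0 i) eta0 (t0 i) (Fmono i) (hmarg i)).
      exact: h.
  rewrite setE.
  have JB : P [set w | forall i, X i w <= t i] = (joint_cdf P (fun i w => X i w) t)%:E.
    by rewrite /joint_cdf fineK // fin_num_measure //; exact: measurable_jB.
  rewrite JB; congr (_%:E).
  have /andP[Jt0 _] := hJ t t0.
  have ellt : ell P (fun i w => X i w) t = - ln r * L.
    by rewrite /t hhom // pw_aux2.
  have -> : joint_cdf P (fun i w => X i w) t = expR (- ell P (fun i w => X i w) t).
    by rewrite /ell opprK lnK // posrE.
  rewrite ellt /powR (gt_eqF r0); congr expR.
  by rewrite mulNr opprK mulrC.
have cdf1 r : 1 <= r -> P [set w | Zf w <= r] = 1%E.
  move=> r1; rewrite (_ : [set w | Zf w <= r] = setT) ?probability_setT //.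
  by apply/seteqP; split => w //= _; exact: le_trans (Z1 w) r1.
have mZle r : measurable [set w | Zf w <= r] := measurable_le Zr r.
have cdf0 : P [set w | Zf w <= 0] = 0%E.
  have fin : P [set w | Zf w <= 0] \is a fin_num by rewrite fin_num_measure.
  set a := fine (P [set w | Zf w <= 0]).
  have Pa : P [set w | Zf w <= 0] = a%:E by rewrite fineK.
  rewrite Pa; congr (_%:E).
  have a0 : 0 <= a by rewrite fine_ge0.
  have a1 : a <= 1.
    by rewrite -lee_fin -Pa; apply: probability_le1.
  have ale r : 0 < r < 1 -> a <= r `^ L.
    move=> hr; rewrite -lee_fin -Pa -cdfZ //; rewrite le_measure ?inE //.
    by move=> w /= h; apply: le_trans h _; case/andP: hr => /ltW.
  apply/le_anti; rewrite a0 andbT leNgt; apply/negP => apos.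
  pose r := (a / 2) `^ L^-1.
  have a2 : 0 < a / 2 by rewrite divr_gt0.
  have r0 : 0 < r by rewrite powR_gt0.
  have r1 : r < 1.
    have := @gt0_ltr_powR R L^-1 _ (a / 2) 1; rewrite powR1 invr_gt0 Lpos; apply => //.
      by rewrite nnegrE ltW.
    by rewrite nnegrE.
    lra.
  have := ale r; rewrite r0 r1 /= -powRrM mulVf ?gt_eqF // powRr1; last exact: ltW.
  move=> /(_ isT); lra.
have ccdfE r : ccdf Zr r = (1 - P [set w | (Zf w <= r)%R])%E.
  rewrite ccdf_1_cdf /cdf /distribution /pushforward /=.
  by congr (_ - P _)%E; apply/seteqP; split => w /=; rewrite in_itv.
rewrite ge0_expectation_ccdf; last exact: Z0.
have itvE : `[0%R, +oo[%classic = `[0%R, 1%R]%classic `|` `]1%R, +oo[%classic :> set R.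
  apply/seteqP; split => x /=; rewrite !in_itv /= ?andbT.
  - move=> x0; have [x1|x1] := leP x 1; [left|right]; by rewrite ?x0 ?x1.
  - by case=> [/andP[]//|/ltW/(le_trans ler01)].
have mccdf : measurable_fun ((`[0%R, 1%R]%classic `|` `]1%R, +oo[%classic) : set R) (ccdf Zr).
  exact: measurable_funTS (ccdf_measurable Zr).
have ccdf_ge0 x : (0 <= ccdf Zr x)%E by rewrite /ccdf; exact: measure_ge0.
have disj : [disjoint (`[0%R, 1%R]%classic : set R) & `]1%R, +oo[%classic].
  rewrite disj_set2E; apply/eqP/seteqP; split => x // [] /=; rewrite !in_itv /=.
  by move=> /andP[_ x1]; rewrite andbT => /(le_lt_trans x1); rewrite ltxx.
rewrite itvE ge0_integral_setU //.
rewrite [X in (_ + X)%E]integral0_eq; last first.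
  move=> x /=; rewrite in_itv /= andbT => x1.
  by rewrite ccdfE cdf1 ?subee // ltW.
rewrite adde0 -(@int01 R L Lpos); apply: eq_integral.
  move=> x; rewrite inE /= in_itv /= => /andP[x0 x1].
  rewrite ccdfE; have [->|xn0] := eqVneq x 0.
    by rewrite cdf0 powR0 ?gt_eqF // subr0 sube0.
  have [->|xn1] := eqVneq x 1.
    by rewrite cdf1 // powR1 subrr subee.
  rewrite cdfZ; first by rewrite EFinB.
  by rewrite lt_neqAle eq_sym xn0 x0 lt_neqAle xn1 x1.
Qed.
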